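(* Let $\mathcal U$ be a finite set, $R_0,\dots,R_{k-1}$ be $n$-place relations on $\mathcal U$, and let $R$ be an $n$-place relation on $\mathcal U$ which is a Boolean combination of $R_0,\dots,R_{k-1}$. Then $\lambda'_0(R)\le\sum_{\ell<k}\lambda'_0(R_\ell)$, and hence $\lambda_0(R)\le\sum_{\ell<k}\lambda_0(R_\ell)$.
   Context: For $A\subseteq\mathcal U$ and $n$-tuples $\bar b=\langle b_i\rangle,\bar c=\langle c_i\rangle$ from $\mathcal U$, $\bar b\approx_A\bar c$ means: $b_i\in A\iff c_i\in A$; $b_i\in A\Rightarrow b_i=c_i$; and $b_i=b_j\iff c_i=c_j$. For an $n$-place relation $S$ on $\mathcal U$, $\lambda'_0(S)$ is the least $|A|$ over $A\subseteq\mathcal U$ such that for all $n$-tuples $\bar b,\bar c$ from $\mathcal U$, $\bar b\approx_A\bar c$ implies ($S(\bar b)\iff S(\bar c)$); and $\lambda_0(S)=\min\{\lfloor|\mathcal U|/2\rfloor,\lambda'_0(S)\}$. *)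

(* Defs.v *)
From mathcomp Require Import all_boot.
Set Implicit Arguments. Unset Strict Implicit. Unset Printing Implicit Defensive.

Definition rel_n (U : finType) (n : nat) := n.-tuple U -> bool.

Definition approx (U : finType) (n : nat) (A : {set U}) (b c : n.-tuple U) : bool :=
  [&& [forall i : 'I_n, (tnth b i \in A) == (tnth c i \in A)],
      [forall i : 'I_n, (tnth b i \in A) ==> (tnth b i == tnth c i)] &
      [forall i : 'I_n, forall j : 'I_n, (tnth b i == tnth b j) == (tnth c i == tnth c j)]].

Definition supports (U : finType) (n : nat) (S : rel_n U n) (A : {set U}) : bool :=
  [forall b : n.-tuple U, forall c : n.-tuple U, approx A b c ==> (S b == S c)].

(* λ'_0(S): least |A| over supporting A (A = U always supports, so the
   min with default #|U| is the true minimum). *)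
Definition lambda0' (U : finType) (n : nat) (S : rel_n U n) : nat :=
  \big[minn/#|U|]_(A : {set U} | supports S A) #|A|.

Definition lambda0 (U : finType) (n : nat) (S : rel_n U n) : nat :=
  minn (#|U| %/ 2) (lambda0' S).

Definition bool_comb (U : finType) (n k : nat) (Rs : 'I_k -> rel_n U n) (R : rel_n U n) : Prop :=
  exists f : {ffun 'I_k -> bool} -> bool,
    forall b : n.-tuple U, R b = f [ffun l => Rs l b].

(* Main.v *)
Require Import Defs.
From mathcomp Require Import all_boot.
Set Implicit Arguments.

Lemma approx_sub (U : finType) (n : nat) (A B : {set U}) (b c : n.-tuple U) :
  A \subset B -> approx B b c -> approx A b c.
Proof.
move=> /subsetP sAB /and3P[/forallP H1 /forallP H2 H3].
apply/and3P; split=> //.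
- apply/forallP=> i; have e1 := H1 i; have e2 := H2 i.
  case bA: (tnth b i \in A).
  + have bB := sAB _ bA; rewrite bB in e2; by rewrite -(eqP e2) bA.
  + case cA: (tnth c i \in A) => //.
    have cB := sAB _ cA; rewrite -(eqP e1) in cB; rewrite cB in e2.
    by rewrite (eqP e2) cA in bA.
- apply/forallP=> i; apply/implyP=> bA; have e2 := H2 i.
  by rewrite (sAB _ bA) in e2.
Qed.

Lemma lambda0'_le (U : finType) (n : nat) (S : rel_n U n) (A : {set U}) :
  supports S A -> lambda0' S <= #|A|.
Proof.
move=> sA; rewrite /lambda0' -big_filter.
have : A \in [seq i <- index_enum {set U} | supports S i].
  by rewrite mem_filter sA mem_index_enum.
elim: [seq _ <- _ | _] => //= x s IH; rewrite big_cons in_cons.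
case/orP => [/eqP-> | /IH h]; first exact: geq_minl.
exact: leq_trans (geq_minr _ _) h.
Qed.

Lemma supportsT (U : finType) (n : nat) (S : rel_n U n) : supports S setT.
Proof.
apply/forallP=> b; apply/forallP=> c; apply/implyP=> /and3P[_ /forallP H _].
have -> : b = c; last by [].
apply: eq_from_tnth => i; have := H i; by rewrite in_setT => /eqP.
Qed.

Lemma lambda0'_ex (U : finType) (n : nat) (S : rel_n U n) :
  exists A, supports S A && (#|A| == lambda0' S).
Proof.
rewrite /lambda0'.
apply: (big_ind (fun x => exists A, supports S A && (#|A| == x))).
- by exists setT; rewrite supportsT cardsT eqxx.
- move=> x y [A HA] [B HB]; rewrite /minn; case: (x < y); [by exists A | by exists B].
- by move=> A sA; exists A; rewrite sA eqxx.
Qed.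

Theorem claim2p6 (U : finType) (n k : nat) (Rs : 'I_k -> rel_n U n) (R : rel_n U n) :
  bool_comb Rs R ->
  lambda0' R <= \sum_(l < k) lambda0' (Rs l) /\
  lambda0 R <= \sum_(l < k) lambda0 (Rs l).
Proof.
move=> [f Hf].
have P1 : lambda0' R <= \sum_(l < k) lambda0' (Rs l).
  pose A l := xchoose (lambda0'_ex (Rs l)).
  have HA l : supports (Rs l) (A l) && (#|A l| == lambda0' (Rs l))
    := xchooseP (lambda0'_ex (Rs l)).
  have sR : supports R (\bigcup_(l < k) A l).
    apply/forallP=> b; apply/forallP=> c; apply/implyP=> ap.
    rewrite !Hf; apply/eqP; congr f; apply/ffunP=> l; rewrite !ffunE.
    have /andP[/forallP sl _] := HA l.
    have /forallP sl2 := sl b; have /implyP sl3 := sl2 c.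
    apply/eqP; apply: sl3; apply: approx_sub ap.
    exact: (bigcup_sup l).
  have L := lambda0'_le R _ sR. apply: (leq_trans L).
  have -> : \sum_(l < k) lambda0' (Rs l) = \sum_(l < k) #|A l|.
    by apply: eq_bigr => l _; have /andP[_ /eqP ->] := HA l.
  elim/big_rec2: _; first by rewrite cards0.
  move=> i y1 y2 _ Hy; apply: leq_trans (leq_card_setU _ _) _.
  by rewrite leq_add2l.
split=> //.
case: (boolP [exists l : 'I_k, #|U| %/ 2 <= lambda0' (Rs l)]).
- move=> /existsP[l hl]; rewrite (bigD1 l) //=.
  apply: leq_trans (leq_addr _ _); rewrite /lambda0 (minn_idPl hl); exact: geq_minl.
- move=> /existsPn hn.
  have -> : \sum_(l < k) lambda0 (Rs l) = \sum_(l < k) lambda0' (Rs l).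
    apply: eq_bigr => l _; rewrite /lambda0; apply/minn_idPr.
    by have := hn l; rewrite -ltnNge => /ltnW.
  apply: leq_trans P1; exact: geq_minr.
Qed.
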